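(* Let $0<\nu<1$, $n\ge2$, and define K-functions as in the context. For the functions (a) $\tilde p_n^{(q)}(\underline{l})=\prod_{i=1}^nq^{(-1)^{l_i}}$ ($q\neq0$), (b) $\tilde p_n^{(N)}(\underline{l})=\big(\sum_{i=1}^n(-1)^{l_i}\big)^N$ ($N\ge0$ an integer), (c) $\tilde p_n^{(\pm)}(\underline{\theta},\underline{l})=\sum_{i=1}^ne^{\mp\theta_i}\sum_{i=1}^ne^{\pm z_i^{(l_i)}}$ with $z_i^{(l)}=\theta_i-\frac{i\pi}{2}(1-(-1)^l\nu)$, the corresponding K-functions satisfy, as $\operatorname{Re}\theta_1\to\infty$ with $\theta_2,\dots,\theta_n$ fixed, writing $\underline{\theta}'=(\theta_2,\dots,\theta_n)$: (a) $\tilde K_n^{(q)}(\underline{\theta})=\tilde K_1^{(q)}(\theta_1)\tilde K_{n-1}^{(q)}(\underline{\theta}')+O(e^{-\operatorname{Re}\theta_1})$; (b) $\tilde K_n^{(N)}(\underline{\theta})=\sum_{K=1}^{N-1}\binom{N}{K}\tilde K_1^{(K)}(\theta_1)\tilde K_{n-1}^{(N-K)}(\underline{\theta}')+O(e^{-\operatorname{Re}\theta_1})$; (c) $\tilde K_n^{\pm}(\underline{\theta})=\pm2i\sin\pi\nu\,\tilde K_{n-1}^{\pm}(\underline{\theta}')+O(e^{-\operatorname{Re}\theta_1})$. In particular $\tilde K_1^{(1)}(\theta)$ is constant and $\tilde K_n^{(1)}(\underline{\theta})=O(e^{-\operatorname{Re}\theta_1})$ for $n>1$.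
   Context: $\theta_{ij}=\theta_i-\theta_j$. For a function $\tilde p_m(\underline{\theta},\underline{l})$, $\underline{l}\in\{0,1\}^m$, its K-function is $$\tilde K_m(\underline{\theta})=\sum_{\underline{l}\in\{0,1\}^m}(-1)^{l_1+\dots+l_m}\prod_{1\le i<j\le m}\Big(1+(l_i-l_j)\frac{i\sin\pi\nu}{\sinh\theta_{ij}}\Big)\tilde p_m(\underline{\theta},\underline{l}).$$ *)

(* Defs.v *)
From HB Require Import structures.
From mathcomp Require Import all_boot all_order all_algebra.
From mathcomp Require Import complex.
From mathcomp Require Import reals sequences exp trigo.
Set Implicit Arguments. Unset Strict Implicit. Unset Printing Implicit Defensive.
Import Order.TTheory GRing.Theory Num.Theory.
Local Open Scope ring_scope.
Local Open Scope complex_scope.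

Section Defs.
Context {R : realType}.
Local Notation C := R[i].

Definition cexp (z : C) : C :=
  (expR (complex.Re z) * cos (complex.Im z)) +i* (expR (complex.Re z) * sin (complex.Im z)).

Definition csinh (z : C) : C := (cexp z - cexp (- z)) / 2.

(* l : {ffun 'I_m -> bool} encodes l in {0,1}^m (true = 1). *)
Definition bnat (b : bool) : C := (nat_of_bool b)%:R.

Definition Kfun (nu : R) (m : nat)
    (p : ('I_m -> C) -> {ffun 'I_m -> bool} -> C) (th : 'I_m -> C) : C :=
  \sum_(l : {ffun 'I_m -> bool})
     (-1) ^+ (\sum_(i < m) nat_of_bool (l i))%N
   * (\prod_(i < m) \prod_(j < m | (i < j)%N)
        (1 + (bnat (l i) - bnat (l j)) * ((0 +i* 1) * (sin (pi * nu))%:C) / csinh (th i - th j)))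
   * p th l.

Definition p_q (q : C) {m : nat} (th : 'I_m -> C) (l : {ffun 'I_m -> bool}) : C :=
  \prod_(i < m) (if l i then q^-1 else q).

Definition p_N (N : nat) {m : nat} (th : 'I_m -> C) (l : {ffun 'I_m -> bool}) : C :=
  (\sum_(i < m) (if l i then -1 else 1)) ^+ N.

Definition zl (nu : R) (t : C) (b : bool) : C :=
  t - ((0 +i* 1) * (pi / 2)%:C) * (1 - (if b then -1 else 1) * nu%:C).

(* (c) sign s (true = "+", false = "-"):
   p^(±)(th,l) = (sum_i e^(∓ th_i)) (sum_i e^(± z_i^(l_i))) *)
Definition sgnb (s : bool) : C := if s then 1 else -1.

Definition p_pm (nu : R) (s : bool) {m : nat} (th : 'I_m -> C) (l : {ffun 'I_m -> bool}) : C :=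
  (\sum_(i < m) cexp (- sgnb s * th i)) * (\sum_(i < m) cexp (sgnb s * zl nu (th i) (l i))).

Definition vcons (m : nat) (x : C) (v : 'I_m -> C) : 'I_m.+1 -> C :=
  fun i => match unlift ord0 i with Some j => v j | None => x end.

Definition bigO_Re (F : C -> C) : Prop :=
  exists c M : R, forall t : C, M < complex.Re t -> `|F t| <= (c * expR (- complex.Re t))%:C.

End Defs.

(* Main.v *)
Require Import Defs.
From HB Require Import structures.
From mathcomp Require Import all_boot all_order all_algebra.
From mathcomp Require Import complex.
From mathcomp Require Import reals sequences exp trigo.
From mathcomp Require Import ring lra zify.
Import Order.TTheory GRing.Theory Num.Theory.
Local Open Scope ring_scope.
Local Open Scope complex_scope.
Set Implicit Arguments. Unset Strict Implicit. Unset Printing Implicit Defensive.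

Section S0.
Context {R : realType}.
Local Notation C := R[i].

Definition nr (z : C) : R := Num.sqrt ((complex.Re z)^+2 + (complex.Im z)^+2).
Lemma normE (z : C) : `|z| = (nr z)%:C.
Proof. by rewrite normc_def. Qed.
Lemma nr_ge0 (z : C) : 0 <= nr z. Proof. exact: sqrtr_ge0. Qed.

Lemma cexpD (u v : C) : cexp (u + v) = cexp u * cexp v.
Proof.
case: u => a b; case: v => c d; rewrite /cexp /=.
rewrite expRD cosD sinD; apply/eqP; rewrite eq_complex /=; apply/andP; split; apply/eqP; ring.
Qed.

Lemma cexp0 : cexp 0 = 1 :> C.
Proof. by rewrite /cexp /= expR0 cos0 sin0 mulr1 mulr0. Qed.

Lemma norm_cexp (u : C) : `|cexp u| = (expR (complex.Re u))%:C.
Proof.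
rewrite normc_def /cexp /= !exprMn -mulrDr [_ + sin _ ^+ 2]cos2Dsin2 mulr1.
by rewrite sqrtr_sqr ger0_norm // ltW // expR_gt0.
Qed.

Lemma cexpN_mul (u : C) : cexp u * cexp (- u) = 1.
Proof. by rewrite -cexpD subrr cexp0. Qed.

Lemma cexp_neq0 (u : C) : cexp u != 0.
Proof. apply/negP => /eqP h; have := cexpN_mul u; rewrite h mul0r => /eqP; by rewrite eq_sym oner_eq0. Qed.

Lemma cexpN (u : C) : cexp (- u) = (cexp u)^-1.
Proof. by apply: (mulfI (cexp_neq0 u)); rewrite cexpN_mul divff // cexp_neq0. Qed.

Lemma csinhN (z : C) : csinh (- z) = - csinh z.
Proof. rewrite /csinh opprK; ring. Qed.

Lemma csinhE (u v : C) : csinh (u - v) = (cexp u ^+ 2 - cexp v ^+ 2) / (2 * cexp u * cexp v).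
Proof.
rewrite /csinh opprB !cexpD !cexpN.
have hu := cexp_neq0 u; have hv := cexp_neq0 v.
field. by rewrite hu hv.
Qed.

End S0.
Section S1.
Context {R : realType}.
Local Notation C := R[i].
Variable a : C.

Definition sgnl m (l : {ffun 'I_m -> bool}) : C := (-1) ^+ (\sum_(i < m) nat_of_bool (l i))%N.
Definition ff m (th : 'I_m -> C) (l : {ffun 'I_m -> bool}) i j : C :=
  1 + (bnat (l i) - bnat (l j)) * a / csinh (th i - th j).
Definition Wf m (th : 'I_m -> C) (l : {ffun 'I_m -> bool}) : C :=
  \prod_(i < m) \prod_(j < m | (i < j)%N) ff th l i j.
Definition Kf m (p : ('I_m -> C) -> {ffun 'I_m -> bool} -> C) (th : 'I_m -> C) : C :=
  \sum_(l : {ffun 'I_m -> bool}) sgnl l * Wf th l * p th l.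

Lemma ff_sym m th l i j : @ff m th l i j = ff th l j i.
Proof.
rewrite /ff -[th j - th i]opprB csinhN -[bnat (l j) - _]opprB mulNr invrN.
by rewrite mulrN mulNr opprK.
Qed.

Definition lins m (j : 'I_m.+1) (b : bool) (l : {ffun 'I_m -> bool}) : {ffun 'I_m.+1 -> bool} :=
  [ffun i => if unlift j i is Some k then l k else b].
Definition ldel m (j : 'I_m.+1) (l : {ffun 'I_m.+1 -> bool}) : {ffun 'I_m -> bool} :=
  [ffun k => l (lift j k)].

Lemma lins_j m j b l : @lins m j b l j = b.
Proof. by rewrite ffunE unlift_none. Qed.
Lemma lins_lift m j b l k : @lins m j b l (lift j k) = l k.
Proof. by rewrite ffunE liftK. Qed.
Lemma ldel_lins m j b l : ldel j (@lins m j b l) = l.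
Proof. by apply/ffunP => k; rewrite ffunE lins_lift. Qed.
Lemma lins_ldel m j (l : {ffun 'I_m.+1 -> bool}) : lins j (l j) (ldel j l) = l.
Proof.
apply/ffunP => i; rewrite ffunE; case: unliftP => [k ->|->] //.
by rewrite ffunE.
Qed.

Lemma sum_split m (j : 'I_m.+1) (F : {ffun 'I_m.+1 -> bool} -> C) :
  \sum_l F l = \sum_(b : bool) \sum_(l : {ffun 'I_m -> bool}) F (lins j b l).
Proof.
rewrite pair_big /=.
rewrite (reindex (fun p : bool * {ffun 'I_m -> bool} => lins j p.1 p.2)) //=.
exists (fun l : {ffun 'I_m.+1 -> bool} => (l j, ldel j l)) => [[b l] _ | l _] /=.
  by rewrite lins_j ldel_lins.
by rewrite lins_ldel.
Qed.

Lemma ltn_lift n (j : 'I_n.+1) (i k : 'I_n) : (lift j i < lift j k)%N = (i < k)%N.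
Proof.
rewrite /= /bump; case: (leqP j i) => hi; case: (leqP j k) => hk /=;
  apply/idP/idP => h; lia.
Qed.
End S1.
Section S2.
Context {R : realType}.
Local Notation C := R[i].
Variable a : C.

Lemma prodD1 m (j : 'I_m.+1) (F : 'I_m.+1 -> C) :
  \prod_(i < m.+1) F i = F j * \prod_(k < m) F (lift j k).
Proof. by rewrite (bigD1_ord j). Qed.

Lemma sumD1 m (j : 'I_m.+1) (F : 'I_m.+1 -> nat) :
  (\sum_(i < m.+1) F i = F j + \sum_(k < m) F (lift j k))%N.
Proof. by rewrite (bigD1_ord j). Qed.

Lemma Wdec m (th : 'I_m.+1 -> C) l (j : 'I_m.+1) :
  Wf a th l = (\prod_(k < m) ff a th l j (lift j k)) * Wf a (fun k => th (lift j k)) (ldel j l).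
Proof.
rewrite /Wf.
under eq_bigr do rewrite big_mkcond (prodD1 j) /=.
rewrite (prodD1 j) ltnn mul1r.
rewrite big_split /= mulrA -big_split /=.
congr (_ * _).
  apply: eq_bigr => k _.
  have := neq_lift j k; case: (ltngtP j (lift j k)) => h.
  - by rewrite mulr1.
  - by rewrite mul1r ff_sym.
  - by move=> /negP; case; apply/eqP/val_inj.
apply: eq_bigr => k _; rewrite [RHS]big_mkcond /=; apply: eq_bigr => k' _.
by rewrite ltn_lift /ff !ffunE.
Qed.

Lemma sgnl_lins m j b l : sgnl (@lins m j b l) = (-1) ^+ b * sgnl l :> C.
Proof.
rewrite /sgnl (sumD1 j) lins_j exprD; congr (_ * _).
by apply: congr1; apply: eq_bigr => k _; rewrite lins_lift.
Qed.

Lemma Kdec m (p : ('I_m.+1 -> C) -> {ffun 'I_m.+1 -> bool} -> C) th (j : 'I_m.+1) :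
  Kf a p th = \sum_(b : bool) \sum_(l : {ffun 'I_m -> bool})
    (-1) ^+ b * sgnl l * Wf a (fun k => th (lift j k)) l
    * (\prod_(k < m) (1 + (bnat b - bnat (l k)) * a / csinh (th j - th (lift j k))))
    * p th (lins j b l).
Proof.
rewrite /Kf (sum_split j); apply: eq_bigr => b _; apply: eq_bigr => l _.
rewrite sgnl_lins (Wdec _ _ j) ldel_lins.
have -> : \prod_(k < m) ff a th (lins j b l) j (lift j k) =
   \prod_(k < m) (1 + (bnat b - bnat (l k)) * a / csinh (th j - th (lift j k))).
  by apply: eq_bigr => k _; rewrite /ff lins_j lins_lift.
ring.
Qed.

Lemma Wf_ext m (th1 th2 : 'I_m -> C) l : (forall i, th1 i = th2 i) -> Wf a th1 l = Wf a th2 l.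
Proof. by move=> h; apply: eq_bigr => i _; apply: eq_bigr => k _; rewrite /ff !h. Qed.

End S2.
Section S3.
Context {R : realType}.
Local Notation C := R[i].

Lemma fac_size (c d : C) : size (('X^2) + c%:P * 'X - d%:P) = 3%N /\ (('X^2) + c%:P * 'X - d%:P) \is monic.
Proof.
have hs : (size (c%:P * 'X - d%:P)%R < size ('X^2 : {poly C}))%N.
  rewrite size_polyXn -polyCN size_MXaddC.
  case: ifP => // _; rewrite ltnS; exact: size_polyC_leq1.
rewrite -addrA; split; first by rewrite size_polyDl // size_polyXn.
by rewrite monicE lead_coefDl // lead_coefXn.
Qed.

Lemma monic_coef (Q : {poly C}) N : Q \is monic -> size Q = N.+1 ->
  forall i, (N <= i)%N -> Q`_i = (i == N)%:R.
Proof.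
move=> hm hs i hi; case: (ltngtP N i) hi => // h _.
  by rewrite nth_default ?hs // gtn_eqF.
move/monicP: hm; rewrite lead_coefE hs /= => <-; by rewrite h.
Qed.

Lemma prod_fac_size N (c d : 'I_N -> C) :
  let Q := \prod_(k < N) (('X^2) + (c k)%:P * 'X - (d k)%:P) in
  Q \is monic /\ size Q = (N.*2).+1.
Proof.
move=> Q; split; first by apply: monic_prod => k _; case: (fac_size (c k) (d k)).
rewrite /Q size_prod; last by move=> k _; apply: monic_neq0; case: (fac_size (c k) (d k)).
under eq_bigr do rewrite (proj1 (fac_size _ _)).
rewrite sum_nat_const card_ord; lia.
Qed.
End S3.
Section S4.
Context {R : realType}.
Local Notation C := R[i].
Variable a : C.

Definition K0 m (th : 'I_m -> C) : C := \sum_(l : {ffun 'I_m -> bool}) sgnl l * Wf a th l.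
Definition hyp m (th : 'I_m -> C) := forall i j : 'I_m, i != j -> csinh (th i - th j) != 0.

Definition fac N (th' : 'I_N -> C) (b : bool) (l : {ffun 'I_N -> bool}) (k : 'I_N) : {poly C} :=
  ('X^2) + ((bnat b - bnat (l k)) * 2 * a * cexp (th' k))%:P * 'X - (cexp (th' k) ^+ 2)%:P.
Definition Pp N (th' : 'I_N -> C) : {poly C} :=
  \sum_(b : bool) \sum_(l : {ffun 'I_N -> bool}) ((-1) ^+ b * sgnl l * Wf a th' l)%:P * \prod_(k < N) fac th' b l k.

Definition gz N (th' : 'I_N -> C) z b e k : C :=
  z ^+ 2 + (bnat b - bnat e) * 2 * a * cexp (th' k) * z - cexp (th' k) ^+ 2.

Lemma Pp_eval N (th' : 'I_N -> C) z : (Pp th').[z] =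
  \sum_(b : bool) \sum_(l : {ffun 'I_N -> bool}) (-1) ^+ b * sgnl l * Wf a th' l *
     \prod_(k < N) gz th' z b (l k) k.
Proof.
rewrite /Pp horner_sum; apply: eq_bigr => b _; rewrite horner_sum; apply: eq_bigr => l _.
rewrite hornerCM horner_prod; congr (_ * _); apply: eq_bigr => k _.
by rewrite /fac /gz !hornerE.
Qed.

Lemma Pp_size N (th' : 'I_N -> C) : (size (Pp th') <= N.*2)%N.
Proof.
apply/leq_sizeP => i hi.
have hQ : forall b l, (\prod_(k < N) fac th' b l k)`_i = (i == N.*2)%:R.
  move=> b l; case: (prod_fac_size (fun k => (bnat b - bnat (l k)) * 2 * a * cexp (th' k))
                       (fun k => cexp (th' k) ^+ 2)) => hm hs.
  exact: monic_coef hm hs i hi.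
rewrite /Pp coef_sum big_bool /= !coef_sum -big_split /=; apply: big1 => l _.
rewrite !coefCM !hQ; ring.
Qed.


Definition hh N (th' : 'I_N.+1 -> C) (j : 'I_N.+1) z (b c e : bool) (k : 'I_N) : C :=
  (1 + (bnat c - bnat e) * a / csinh (th' j - th' (lift j k))) * gz th' z b e (lift j k).

Lemma Pp_root N (th' : 'I_N.+1 -> C) (j : 'I_N.+1) z : z ^+ 2 = cexp (th' j) ^+ 2 ->
  (Pp th').[z] = \sum_(l : {ffun 'I_N -> bool}) sgnl l * Wf a (fun k => th' (lift j k)) l *
   (2 * a * cexp (th' j) * z *
     (\prod_(k < N) hh th' j z false true (l k) k - \prod_(k < N) hh th' j z true false (l k) k)).
Proof.
move=> hz; rewrite Pp_eval.
have E : forall b : bool, \sum_(l : {ffun 'I_N.+1 -> bool}) (-1) ^+ b * sgnl l * Wf a th' l *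
     \prod_(k < N.+1) gz th' z b (l k) k =
   \sum_(c : bool) \sum_(l : {ffun 'I_N -> bool}) (-1) ^+ b * ((-1) ^+ c * sgnl l) *
     ((\prod_(k < N) (1 + (bnat c - bnat (l k)) * a / csinh (th' j - th' (lift j k))))
       * Wf a (fun k => th' (lift j k)) l) *
     (gz th' z b c j * \prod_(k < N) gz th' z b (l k) (lift j k)).
  move=> b; rewrite (sum_split j); apply: eq_bigr => c _; apply: eq_bigr => l _.
  rewrite sgnl_lins (Wdec a _ _ j) ldel_lins (prodD1 j) lins_j.
  congr (_ * (_ * _) * (_ * _)).
    by apply: eq_bigr => k _; rewrite /ff lins_j lins_lift.
  by apply: eq_bigr => k _; rewrite lins_lift.
rewrite (eq_bigr _ (fun b _ => E b)) /=.
under eq_bigr do rewrite exchange_big /=.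
rewrite exchange_big /=; apply: eq_bigr => l _.
rewrite !big_bool /=.
have hj : forall b c, gz th' z b c j = (bnat b - bnat c) * 2 * a * cexp (th' j) * z.
  by move=> b c; rewrite /gz hz; ring.
rewrite !hj /hh !big_split /= /bnat /=.
ring.
Qed.


Lemma two_neq0 : (2 : C) != 0.
Proof. by rewrite pnatr_eq0. Qed.

Lemma hyp_D m (th : 'I_m -> C) i k : hyp th -> i != k ->
  cexp (th i) ^+ 2 - cexp (th k) ^+ 2 != 0.
Proof.
move=> h hik; have := h i k hik; rewrite csinhE; apply: contra => /eqP ->.
by rewrite mul0r.
Qed.

Lemma root_plus N (th' : 'I_N.+1 -> C) (j : 'I_N.+1) : hyp th' -> (Pp th').[cexp (th' j)] = 0.
Proof.
move=> h; rewrite (@Pp_root _ _ j) //; apply: big1 => l _.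
suff -> : \prod_(k < N) hh th' j (cexp (th' j)) false true (l k) k =
          \prod_(k < N) hh th' j (cexp (th' j)) true false (l k) k by rewrite subrr !mulr0.
apply: eq_bigr => k _; rewrite /hh /gz csinhE.
have hD := hyp_D h (neq_lift j k).
have hy := cexp_neq0 (th' j); have hyk := cexp_neq0 (th' (lift j k)).
have h2 := two_neq0.
by case: (l k); rewrite /bnat /=; field; rewrite ?hD ?hy ?hyk ?h2.
Qed.

Lemma root_minus N (th' : 'I_N.+1 -> C) (j : 'I_N.+1) : hyp th' ->
  (N = 0%N \/ K0 (fun k => th' (lift j k)) = 0) -> (Pp th').[- cexp (th' j)] = 0.
Proof.
move=> h hN; rewrite (@Pp_root _ _ j) ?sqrrN //.
set z := - cexp (th' j).
have H : forall (b c : bool) k e, b != c -> hh th' j z b c e k = hh th' j z b c false k.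
  move=> b c k e hbc; rewrite /hh /gz /z csinhE.
  have hD := hyp_D h (neq_lift j k).
  have hy := cexp_neq0 (th' j); have hyk := cexp_neq0 (th' (lift j k)).
  have h2 := two_neq0.
  by case: b c hbc => [] [] // _; case: e; rewrite /bnat /=; field; rewrite ?hD ?hy ?hyk ?h2.
transitivity (\sum_(l : {ffun 'I_N -> bool}) sgnl l * Wf a (fun k => th' (lift j k)) l *
   (2 * a * cexp (th' j) * z *
     (\prod_(k < N) hh th' j z false true false k - \prod_(k < N) hh th' j z true false false k))).
  apply: eq_bigr => l _; congr (_ * (_ * (_ - _))); apply: eq_bigr => k _; exact: H.
rewrite -mulr_suml; case: hN => [N0|hK]; last by rewrite -[X in X * _ = _]/(K0 (fun k => th' (lift j k))) hK mul0r.
by subst N; rewrite !big_ord0 subrr !mulr0.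
Qed.


Lemma K0dec m (th : 'I_m.+1 -> C) (j : 'I_m.+1) :
  K0 th = \sum_(b : bool) \sum_(l : {ffun 'I_m -> bool})
    (-1) ^+ b * sgnl l * Wf a (fun k => th (lift j k)) l
    * (\prod_(k < m) (1 + (bnat b - bnat (l k)) * a / csinh (th j - th (lift j k)))).
Proof.
transitivity (Kf a (fun _ _ => 1) th).
  by apply: eq_bigr => l _; rewrite mulr1.
rewrite (Kdec a _ th j); apply: eq_bigr => b _; apply: eq_bigr => l _; by rewrite mulr1.
Qed.

Lemma hyp_lift m (th : 'I_m.+1 -> C) (j : 'I_m.+1) : hyp th -> hyp (fun k => th (lift j k)).
Proof.
move=> h i k hik; apply: h; apply: contra hik => /eqP /lift_inj ->; by [].
Qed.

Lemma K0_zero n : forall th : 'I_n.+1 -> C, hyp th -> K0 th = 0.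
Proof.
elim/ltn_ind: n => n IH th h.
case: n IH th h => [|n] IH th h.
  rewrite (K0dec th ord0).
  under eq_bigr do under eq_bigr do rewrite big_ord0 mulr1.
  rewrite big_bool /= -big_split /=; apply: big1 => l _; rewrite expr1 expr0; ring.
set th' := fun k => th (lift ord0 k).
have h' : hyp th' by exact: hyp_lift.
have hsub : forall k : 'I_n.+1, n = 0%N \/ K0 (fun k0 => th' (lift k k0)) = 0.
  move=> k; case: n IH th h th' h' k => [|n] IH th h th' h' k; first by left.
  by right; apply: IH => //; exact: hyp_lift.
have sqinj : forall k k', cexp (th' k) ^+ 2 = cexp (th' k') ^+ 2 -> k = k'.
  move=> k k' E; case: (eqVneq k k') => // hne.
  by move: (hyp_D h' hne); rewrite E subrr eqxx.
pose rt := fun s : ('I_n.+1 + 'I_n.+1)%type =>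
  match s with inl k => cexp (th' k) | inr k => - cexp (th' k) end.
have rt_inj : injective rt.
  case=> k; case=> k' /= E.
  - by rewrite (sqinj k k') // E.
  - have e := sqinj k k'; rewrite E sqrrN in e; have ekk := e erefl; subst k'.
    move/eqP: E; rewrite -subr_eq0 opprK -mulr2n -mulr_natr mulf_eq0 (negbTE (cexp_neq0 _)) /=.
    by rewrite pnatr_eq0.
  - have e := sqinj k k'; rewrite -sqrrN E in e; have ekk := e erefl; subst k'.
    move/eqP: E; rewrite eq_sym -subr_eq0 opprK -mulr2n -mulr_natr mulf_eq0 (negbTE (cexp_neq0 _)) /=.
    by rewrite pnatr_eq0.
  - by move/oppr_inj: E => E; rewrite (sqinj k k') // E.
have hP : Pp th' = 0.
  apply/eqP; apply/negPn/negP => hne.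
  have := @max_poly_roots _ (Pp th') [seq rt s | s <- enum {: ('I_n.+1 + 'I_n.+1)%type}] hne.
  rewrite map_inj_uniq // enum_uniq size_map -cardE card_sum card_ord.
  have hs := Pp_size th'.
  have hall : all (root (Pp th')) [seq rt s | s <- enum {: ('I_n.+1 + 'I_n.+1)%type}].
    apply/allP => z /mapP [s _ ->]; case: s => k /=; apply/rootP.
      exact: root_plus.
    exact: root_minus.
  move=> /(_ hall isT) hlt.
  by move: (leq_trans hlt hs); rewrite /= -addnn ltnn.
have hx : (Pp th').[cexp (th ord0)] = (\prod_(k < n.+1) (cexp (th ord0) ^+ 2 - cexp (th' k) ^+ 2)) * K0 th.
  rewrite Pp_eval (K0dec th ord0) mulr_sumr; apply: eq_bigr => b _.
  rewrite mulr_sumr; apply: eq_bigr => l _.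
  have hf : forall k, gz th' (cexp (th ord0)) b (l k) k =
     (cexp (th ord0) ^+ 2 - cexp (th' k) ^+ 2) *
     (1 + (bnat b - bnat (l k)) * a / csinh (th ord0 - th (lift ord0 k))).
    move=> k; rewrite /gz csinhE.
    have hD := hyp_D h (neq_lift ord0 k).
    have hy := cexp_neq0 (th ord0); have hyk := cexp_neq0 (th' k).
    have h2 := two_neq0.
    rewrite /th' in hyk *. field. by rewrite hD hy hyk.
  rewrite (eq_bigr _ (fun k _ => hf k)) big_split /=; ring.
move: hx; rewrite hP horner0 => /esym /eqP; rewrite mulf_eq0 => /orP [|/eqP //].
move=> /prodf_eq0 [k _]; by rewrite (negbTE (hyp_D h (neq_lift ord0 k))).
Qed.

End S4.
Section S5.
Context {R : realType}.
Local Notation C := R[i].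

Lemma nrE (z : C) : (nr z)%:C = `|z|. Proof. by rewrite normE. Qed.
Lemma nrM (z w : C) : nr (z * w) = nr z * nr w.
Proof. have := normrM z w; rewrite !normE -rmorphM; exact: complexI. Qed.
Lemma nrV (z : C) : nr (z^-1) = (nr z)^-1.
Proof. have := normfV z; rewrite !normE -fmorphV; exact: complexI. Qed.
Lemma nrD (z w : C) : nr (z + w) <= nr z + nr w.
Proof. have := ler_normD z w; by rewrite !normE -rmorphD lecR. Qed.
Lemma nrB (z w : C) : nr z - nr w <= nr (z - w).
Proof. have := lerB_dist z w; by rewrite !normE -rmorphB lecR. Qed.
Lemma nrN (z : C) : nr (- z) = nr z.
Proof. have := normrN z; rewrite !normE; exact: complexI. Qed.
Lemma nrX (z : C) n : nr (z ^+ n) = nr z ^+ n.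
Proof. have := normrX n z; rewrite !normE -rmorphXn; exact: complexI. Qed.
Lemma nr_cexp (t : C) : nr (cexp t) = expR (complex.Re t).
Proof. have := norm_cexp t; rewrite !normE; exact: complexI. Qed.
Lemma nr0 : nr (0 : C) = 0.
Proof. have := @normr0 _ C; rewrite !normE; exact: complexI. Qed.
Lemma ReN (t : C) : complex.Re (- t) = - complex.Re t.
Proof. by case: t. Qed.

Definition Ok (k : nat) (F : C -> C) :=
  exists c M : R, forall t : C, M < complex.Re t -> nr (F t) <= c * expR (- complex.Re t) ^+ k.

Lemma Ok_ext k (F G : C -> C) : (forall t, F t = G t) -> Ok k F -> Ok k G.
Proof. by move=> e [c [M h]]; exists c, M => t ht; rewrite -e; apply: h. Qed.

Lemma Ok0 k : Ok k (fun _ => 0).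
Proof. exists 0, 0 => t _; by rewrite nr0 mul0r. Qed.

Lemma Ok_add k F G : Ok k F -> Ok k G -> Ok k (fun t => F t + G t).
Proof.
move=> [c1 [M1 h1]] [c2 [M2 h2]]; exists (c1 + c2), (Num.max M1 M2) => t.
rewrite gt_max => /andP [t1 t2].
apply: (le_trans (nrD _ _)); rewrite mulrDl; apply: lerD; [exact: h1 | exact: h2].
Qed.

Lemma Ok_sum k (I : Type) (r : seq I) (F : I -> C -> C) :
  (forall i, Ok k (F i)) -> Ok k (fun t => \sum_(i <- r) F i t).
Proof.
move=> h; elim: r => [|i r IH].
  by apply: Ok_ext (Ok0 k) => t; rewrite big_nil.
by apply: Ok_ext (Ok_add (h i) IH) => t; rewrite big_cons.
Qed.

Lemma Ok_mul j k F G : Ok j F -> Ok k G -> Ok (j + k) (fun t => F t * G t).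
Proof.
move=> [c1 [M1 h1]] [c2 [M2 h2]]; exists (c1 * c2), (Num.max M1 M2) => t.
rewrite gt_max => /andP [t1 t2].
rewrite nrM exprD.
have -> : c1 * c2 * (expR (- complex.Re t) ^+ j * expR (- complex.Re t) ^+ k) =
  (c1 * expR (- complex.Re t) ^+ j) * (c2 * expR (- complex.Re t) ^+ k) by ring.
by apply: ler_pM; rewrite ?nr_ge0 ?h1 ?h2.
Qed.

Lemma Ok_const (c : C) : Ok 0 (fun _ => c).
Proof. by exists (nr c), 0 => t _; rewrite expr0 mulr1. Qed.

Lemma Ok_weaken k F : Ok k.+1 F -> Ok k F.
Proof.
move=> [c [M h]]; exists `|c|, (Num.max M 0) => t; rewrite gt_max => /andP [t1 t2].
apply: (le_trans (h t t1)); rewrite exprS mulrA.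
have u0 : 0 <= expR (- complex.Re t) by apply: ltW; apply: expR_gt0.
have u1 : expR (- complex.Re t) <= 1.
  by rewrite -expR0 ler_expR lerNl oppr0 ltW.
apply: ler_wpM2r; first by apply: exprn_ge0.
apply: (le_trans (ler_norm _)); rewrite normrM (ger0_norm u0).
by rewrite ler_piMr.
Qed.

Lemma Ok_cexp k F : Ok k.+1 F -> Ok k (fun t => cexp t * F t).
Proof.
move=> [c [M h]]; exists c, M => t ht; rewrite nrM nr_cexp.
have e := expR_gt0 (complex.Re t).
rewrite -(ler_pdivlMl _ _ e); apply: (le_trans (h t ht)).
rewrite exprS expRN.
have -> : c * ((expR (complex.Re t))^-1 * (expR (complex.Re t))^-1 ^+ k) =
   c * (expR (complex.Re t))^-1 ^+ k / expR (complex.Re t) by ring.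
by rewrite mulrC.
Qed.

Lemma Ok_cexpN : Ok 1 (fun t => cexp (- t)).
Proof. by exists 1, 0 => t _; rewrite nr_cexp ReN expr1 mul1r. Qed.

Lemma bigO_Ok F : Ok 1 F -> bigO_Re F.
Proof.
move=> [c [M h]]; exists c, M => t ht; rewrite normE lecR; by rewrite -[expR _]expr1 h.
Qed.

End S5.
Section S6.
Context {R : realType}.
Local Notation C := R[i].

Lemma nr2 : nr (2 : C) = 2.
Proof. have := normr_nat C 2; rewrite normE -(rmorph_nat (real_complex R) 2); exact: complexI. Qed.

Lemma nr_eq0 (z : C) : (nr z == 0) = (z == 0).
Proof. by rewrite -[z == 0]normr_eq0 normE -[0 : C]/((0:R)%:C) (inj_eq (@complexI R)). Qed.

Lemma winv_est (th : C) : Ok 1 (fun t => (csinh (t - th))^-1) /\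
   Ok 2 (fun t => cexp t * (csinh (t - th))^-1 - 2 * cexp th).
Proof.
set y := cexp th; set Y := nr y.
have Y0 : 0 <= Y by apply: nr_ge0.
have key : forall t : C, 2 * Y ^+ 2 + 1 < complex.Re t ->
   let X := expR (complex.Re t) in
   [/\ 1 <= X, X ^+ 2 / 2 <= nr (cexp t ^+ 2 - y ^+ 2),
       (csinh (t - th))^-1 = 2 * cexp t * y / (cexp t ^+ 2 - y ^+ 2) &
       cexp t ^+ 2 - y ^+ 2 != 0].
  move=> t ht X.
  have hX : 2 * Y ^+ 2 + 2 < X.
    have := expR_ge1Dx (complex.Re t); rewrite -/X => h; lra.
  have X1 : 1 <= X by apply: (le_trans _ (ltW hX)); nra.
  have hD : X ^+ 2 / 2 <= nr (cexp t ^+ 2 - y ^+ 2).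
    apply: (le_trans _ (nrB _ _)); rewrite !nrX nr_cexp -/X -/Y.
    nra.
  split => //.
    by rewrite csinhE invf_div.
  rewrite -nr_eq0; apply/eqP => e; move: hD; rewrite e; nra.
split.
  exists (4 * Y), (2 * Y ^+ 2 + 1) => t ht.
  have [X1 hD -> hne] := key t ht.
  set X := expR (complex.Re t) in X1 hD *.
  rewrite expr1 expRN -/X (nrM (2 * cexp t * y)) (nrV (cexp t ^+ 2 - y ^+ 2)) (nrM (2 * cexp t)) (nrM 2) nr2 nr_cexp -/X -/Y.
  have nD0 : 0 < nr (cexp t ^+ 2 - y ^+ 2) by apply: (lt_le_trans _ hD); nra.
  rewrite ler_pdivrMr //.
  have u0 : 0 < X^-1 by rewrite invr_gt0; nra.
  have Xu : X * X^-1 = 1 by rewrite divff //; apply: lt0r_neq0; nra.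
  set D := nr (cexp t ^+ 2 - y ^+ 2) in hD nD0 *; set u := X^-1 in u0 Xu *.
  have h1 : 0 <= (D - X ^+ 2 / 2) * (4 * Y * u) by apply: mulr_ge0; [lra | apply: mulr_ge0; lra].
  have h2 : X ^+ 2 / 2 * (4 * Y * u) = 2 * X * Y * (X * u) by rewrite /u; field; lra.
  rewrite Xu mulr1 in h2.
  have -> : 4 * Y / X * D = (D - X ^+ 2 / 2) * (4 * Y * u) + X ^+ 2 / 2 * (4 * Y * u) by rewrite /u; field; lra.
  lra.
exists (4 * Y ^+ 3), (2 * Y ^+ 2 + 1) => t ht.
have [X1 hD -> hne] := key t ht.
set X := expR (complex.Re t) in X1 hD *.
have -> : cexp t * (2 * cexp t * y / (cexp t ^+ 2 - y ^+ 2)) - 2 * y =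
   2 * y ^+ 3 / (cexp t ^+ 2 - y ^+ 2) by field.
rewrite expRN -/X (nrM (2 * y ^+ 3)) (nrV (cexp t ^+ 2 - y ^+ 2)) (nrM 2) nr2 (nrX y 3) -/Y.
have nD0 : 0 < nr (cexp t ^+ 2 - y ^+ 2) by apply: (lt_le_trans _ hD); nra.
rewrite ler_pdivrMr //.
have u0 : 0 < X^-1 by rewrite invr_gt0; nra.
have Xu : X * X^-1 = 1 by rewrite divff //; apply: lt0r_neq0; nra.
set D := nr (cexp t ^+ 2 - y ^+ 2) in hD nD0 *; set u := X^-1 in u0 Xu *.
have Y3 : 0 <= Y ^+ 3 by apply: exprn_ge0.
have h1 : 0 <= (D - X ^+ 2 / 2) * (4 * Y ^+ 3 * u ^+ 2).
  by apply: mulr_ge0; [lra | apply: mulr_ge0; [lra | apply: exprn_ge0; lra]].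
have h2 : X ^+ 2 / 2 * (4 * Y ^+ 3 * u ^+ 2) = 2 * Y ^+ 3 * (X * u) ^+ 2 by rewrite /u; field; lra.
rewrite Xu expr1n mulr1 in h2.
have -> : 4 * Y ^+ 3 * u ^+ 2 * D = (D - X ^+ 2 / 2) * (4 * Y ^+ 3 * u ^+ 2) + X ^+ 2 / 2 * (4 * Y ^+ 3 * u ^+ 2) by ring.
lra.
Qed.

End S6.
Section S7.
Context {R : realType}.
Local Notation C := R[i].

Lemma prod_est n (eps : 'I_n -> C -> C) : (forall k, Ok 1 (eps k)) ->
  [/\ Ok 0 (fun t => \prod_(k < n) (1 + eps k t)),
      Ok 1 (fun t => \prod_(k < n) (1 + eps k t) - 1) &
      Ok 2 (fun t => \prod_(k < n) (1 + eps k t) - 1 - \sum_(k < n) eps k t)].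
Proof.
elim: n eps => [|n IH] eps h.
  split.
  - by apply: Ok_ext (Ok_const 1) => t; rewrite big_ord0.
  - by apply: Ok_ext (Ok0 1) => t; rewrite big_ord0 subrr.
  - by apply: Ok_ext (Ok0 2) => t; rewrite !big_ord0 subrr subr0.
have [I0 I1 I2] := IH (fun k => eps (widen_ord (leqnSn n) k)) (fun k => h _).
have e := h ord_max.
have J1 : Ok 1 (fun t => \prod_(k < n.+1) (1 + eps k t) - 1).
  apply: Ok_ext (Ok_add I1 (Ok_mul I0 e)) => t; rewrite big_ord_recr /=; ring.
split => //.
- apply: Ok_ext (Ok_add (Ok_weaken J1) (Ok_const 1)) => t /=; ring.
- apply: Ok_ext (Ok_add I2 (Ok_mul I1 e)) => t; rewrite big_ord_recr big_ord_recr /=; ring.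
Qed.

Variable a : C.
Definition Ff m (th' : 'I_m -> C) (b : bool) (l : {ffun 'I_m -> bool}) (t : C) : C :=
  \prod_(k < m) (1 + (bnat b - bnat (l k)) * a / csinh (t - th' k)).

Lemma F_est m (th' : 'I_m -> C) b l :
  [/\ Ok 0 (Ff th' b l), Ok 1 (fun t => Ff th' b l t - 1) &
      Ok 1 (fun t => cexp t * (Ff th' b l t - 1) -
          \sum_(k < m) (bnat b - bnat (l k)) * a * (2 * cexp (th' k)))].
Proof.
pose eps := fun k t => (bnat b - bnat (l k)) * a / csinh (t - th' k).
have he : forall k, Ok 1 (eps k).
  move=> k; exact: Ok_mul (Ok_const _) (proj1 (winv_est (th' k))).
have [I0 I1 I2] := prod_est he.
split => //.
have G : Ok 1 (fun t => \sum_(k < m) (bnat b - bnat (l k)) * a *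
     (cexp t * (csinh (t - th' k))^-1 - 2 * cexp (th' k))).
  apply: Ok_sum => k; apply: Ok_weaken.
  exact: Ok_mul (Ok_const _) (proj2 (winv_est (th' k))).
apply: Ok_ext (Ok_add (Ok_cexp I2) G) => t /=.
have -> : \sum_(k < m) (bnat b - bnat (l k)) * a * (cexp t * (csinh (t - th' k))^-1 - 2 * cexp (th' k))
  = cexp t * \sum_(k < m) eps k t - \sum_(k < m) (bnat b - bnat (l k)) * a * (2 * cexp (th' k)).
  rewrite mulr_sumr -sumrB; apply: eq_bigr => k _; rewrite /eps; ring.
rewrite /Ff; ring.
Qed.

End S7.
Section S8.
Context {R : realType}.
Local Notation C := R[i].
Variable a : C.

Lemma vcons0 m (t : C) (th' : 'I_m -> C) : vcons t th' ord0 = t.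
Proof. by rewrite /vcons unlift_none. Qed.
Lemma vcons_lift m (t : C) (th' : 'I_m -> C) k : vcons t th' (lift ord0 k) = th' k.
Proof. by rewrite /vcons liftK. Qed.

Lemma Kvcons m (th' : 'I_m -> C) p (t : C) :
  Kf a p (vcons t th') = \sum_(b : bool) \sum_(l : {ffun 'I_m -> bool})
    (-1) ^+ b * sgnl l * Wf a th' l * Ff a th' b l t * p (vcons t th') (lins ord0 b l).
Proof.
rewrite (Kdec a p _ ord0); apply: eq_bigr => b _; apply: eq_bigr => l _.
rewrite (@Wf_ext _ _ _ _ th'); last by move=> i; rewrite vcons_lift.
congr (_ * _ * _); apply: eq_bigr => k _; by rewrite vcons0 vcons_lift.
Qed.

Definition l0 : {ffun 'I_0 -> bool} := [ffun i => false].

Lemma sum_ffun0 (F : {ffun 'I_0 -> bool} -> C) : \sum_(l : {ffun 'I_0 -> bool}) F l = F l0.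
Proof.
rewrite (big_pred1 l0) // => l /=; apply/esym/eqP/ffunP => i; case: i => i hi.
by [].
Qed.

Lemma K1E p (t : C) : Kf a p (fun _ : 'I_1 => t) =
   \sum_(b : bool) (-1) ^+ b * p (fun _ => t) (lins ord0 b l0).
Proof.
rewrite (Kdec a p _ ord0); apply: eq_bigr => b _; rewrite sum_ffun0.
by rewrite /sgnl /Wf !big_ord0 expr0 !mulr1.
Qed.

Lemma Ok_mul01 F G : Ok 0 F -> Ok 1 G -> Ok 1 (fun t : C => F t * G t).
Proof. exact: (@Ok_mul _ 0 1). Qed.
Lemma Ok_mul10 F G : Ok 1 F -> Ok 0 G -> Ok 1 (fun t : C => F t * G t).
Proof. exact: (@Ok_mul _ 1 0). Qed.

Lemma F_bnd m (th' : 'I_m -> C) b l : Ok 0 (Ff a th' b l).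
Proof. by case: (F_est a th' b l). Qed.
Lemma F_small m (th' : 'I_m -> C) b l : Ok 1 (fun t => Ff a th' b l t - 1).
Proof. by case: (F_est a th' b l). Qed.
Lemma F_grow m (th' : 'I_m -> C) b l : Ok 1 (fun t => cexp t * (Ff a th' b l t - 1) -
         \sum_(k < m) (bnat b - bnat (l k)) * a * (2 * cexp (th' k))).
Proof. by case: (F_est a th' b l). Qed.

Lemma Ok_sum2 k m (F : bool -> {ffun 'I_m -> bool} -> C -> C) :
  (forall b l, Ok k (F b l)) -> Ok k (fun t => \sum_(b : bool) \sum_(l : {ffun 'I_m -> bool}) F b l t).
Proof. by move=> h; apply: Ok_sum => b; apply: Ok_sum => l; apply: h. Qed.

Lemma K0_const m (th' : 'I_m.+1 -> C) (c : C) : hyp th' ->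
  \sum_(l : {ffun 'I_m.+1 -> bool}) sgnl l * Wf a th' l * c = 0.
Proof. by move=> h; rewrite -mulr_suml -/(K0 a th') K0_zero // mul0r. Qed.

Lemma sum2B m (F G : bool -> {ffun 'I_m -> bool} -> C) :
  \sum_(b : bool) \sum_(l : {ffun 'I_m -> bool}) (F b l - G b l) =
  \sum_(b : bool) \sum_(l : {ffun 'I_m -> bool}) F b l - \sum_(b : bool) \sum_(l : {ffun 'I_m -> bool}) G b l.
Proof. by rewrite -sumrB; apply: eq_bigr => b _; rewrite sumrB. Qed.

Lemma case_a m (th' : 'I_m -> C) (q : C) :
  Ok 1 (fun t => Kf a (p_q q) (vcons t th') - Kf a (p_q q) (fun _ : 'I_1 => t) * Kf a (p_q q) th').
Proof.
pose qb := fun b : bool => if b then q^-1 else q.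
have H : Ok 1 (fun t => \sum_(b : bool) \sum_(l : {ffun 'I_m -> bool})
    ((-1) ^+ b * sgnl l * Wf a th' l * qb b * p_q q th' l) * (Ff a th' b l t - 1)).
  apply: Ok_sum2 => b l; exact: Ok_mul01 (Ok_const _) (F_small th' b l).
apply: Ok_ext H => t /=.
rewrite Kvcons K1E /Kf mulr_suml.
under [X in _ = _ - X]eq_bigr do rewrite mulr_sumr.
rewrite -sum2B; apply: eq_bigr => b _; apply: eq_bigr => l _.
have -> : p_q q (vcons t th') (lins ord0 b l) = qb b * p_q q th' l.
  by rewrite /p_q big_ord_recl lins_j; congr (_ * _); apply: eq_bigr => k _; rewrite lins_lift.
have -> : p_q q (fun _ : 'I_1 => t) (lins ord0 b l0) = qb b.
  by rewrite /p_q big_ord1 lins_j.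
ring.
Qed.


Lemma p_N_vcons m (th' : 'I_m -> C) t N b l :
  p_N N (vcons t th') (lins ord0 b l) =
  ((if b then -1 else 1) + \sum_(k < m) (if l k then -1 else 1)) ^+ N.
Proof.
by rewrite /p_N big_ord_recl lins_j; congr ((_ + _) ^+ _); apply: eq_bigr => k _; rewrite lins_lift.
Qed.

Lemma K1_N (t : C) K : Kf a (p_N K) (fun _ : 'I_1 => t) = \sum_(b : bool) (-1) ^+ b * (if b then -1 else 1) ^+ K.
Proof. by rewrite K1E; apply: eq_bigr => b _; rewrite /p_N big_ord1 lins_j. Qed.

Lemma case_b m (th' : 'I_m.+1 -> C) (hth : hyp th') N :
  Ok 1 (fun t => Kf a (p_N N) (vcons t th') -
     \sum_(1 <= K < N) 'C(N, K)%:R * Kf a (p_N K) (fun _ : 'I_1 => t) * Kf a (p_N (N - K)) th').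
Proof.
pose sg := fun b : bool => (if b then -1 else 1) : C.
pose S := fun l : {ffun 'I_m.+1 -> bool} => \sum_(k < m.+1) (if l k then -1 else 1) : C.
have H : Ok 1 (fun t => \sum_(b : bool) \sum_(l : {ffun 'I_m.+1 -> bool})
    ((-1) ^+ b * sgnl l * Wf a th' l * (sg b + S l) ^+ N) * (Ff a th' b l t - 1)).
  apply: Ok_sum2 => b l; exact: Ok_mul01 (Ok_const _) (F_small th' b l).
apply: Ok_ext H => t /=.
pose u := fun K => 'C(N, K)%:R * Kf a (p_N K) (fun _ : 'I_1 => t) * Kf a (p_N (N - K)) th'.
have A : \sum_(b : bool) \sum_(l : {ffun 'I_m.+1 -> bool}) (-1) ^+ b * sgnl l * Wf a th' l * (sg b + S l) ^+ N
   = \sum_(i < N.+1) u i.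
  rewrite /u.
  under eq_bigr do under eq_bigr do rewrite addrC exprDn mulr_sumr.
  under eq_bigr do rewrite exchange_big /=.
  rewrite exchange_big /=; apply: eq_bigr => i _.
  rewrite K1_N /Kf -[RHS]mulrA [in RHS]mulr_suml [in RHS]mulr_sumr; apply: eq_bigr => b _.
  rewrite [in RHS]mulr_sumr [in RHS]mulr_sumr; apply: eq_bigr => l _.
  rewrite /p_N -/(S l) -mulr_natr; ring.
have B : \sum_(i < N.+1) u i = \sum_(1 <= K < N) u K.
  have u0 : u 0%N = 0 by rewrite /u K1_N big_bool /= !expr0; ring.
  case: (posnP N) => [N0 | Npos].
    by rewrite N0 big_ord1 u0 big_geq.
  have uN : u N = 0.
    rewrite /u subnn /Kf.
    have -> : \sum_(l : {ffun 'I_m.+1 -> bool}) sgnl l * Wf a th' l * p_N 0 th' l =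
       \sum_(l : {ffun 'I_m.+1 -> bool}) sgnl l * Wf a th' l * 1 by apply: eq_bigr => l _; rewrite /p_N expr0.
    by rewrite K0_const // mulr0.
  have [N' eN] : exists N', N = N'.+1 by exists N.-1; rewrite prednK.
  rewrite eN in uN *.
  rewrite big_ord_recl u0 add0r big_ord_recr /= uN addr0.
  by rewrite big_add1 /= big_mkord.
rewrite Kvcons -/u -B -A -sum2B; apply: eq_bigr => b _; apply: eq_bigr => l _.
rewrite p_N_vcons -/(sg b) -/(S l); ring.
Qed.


Variable nu : R.
Definition Ez s m (th' : 'I_m -> C) := \sum_(k < m) cexp (- sgnb s * th' k).
Definition Zz s m (th' : 'I_m -> C) (l : {ffun 'I_m -> bool}) :=
  \sum_(k < m) cexp (sgnb s * zl nu (th' k) (l k)).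
Definition om s b : C := cexp (sgnb s * zl nu 0 b).
Definition lin m (th' : 'I_m -> C) b (l : {ffun 'I_m -> bool}) :=
  \sum_(k < m) (bnat b - bnat (l k)) * a * (2 * cexp (th' k)).

Lemma zl_split s (t : C) b : cexp (sgnb s * zl nu t b) = cexp (sgnb s * t) * om s b.
Proof. by rewrite /om -cexpD /zl; congr cexp; ring. Qed.

Lemma p_pm_vcons s m (th' : 'I_m -> C) t b l :
  p_pm nu s (vcons t th') (lins ord0 b l) =
  (cexp (- sgnb s * t) + Ez s th') * (cexp (sgnb s * t) * om s b + Zz s th' l).
Proof.
rewrite /p_pm !big_ord_recl vcons0 lins_j zl_split; congr ((_ + _) * (_ + _)).
  by apply: eq_bigr => k _; rewrite vcons_lift.
by apply: eq_bigr => k _; rewrite vcons_lift lins_lift.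
Qed.

Lemma cexp_sg_mul s (t : C) : cexp (- sgnb s * t) * cexp (sgnb s * t) = 1.
Proof. by rewrite mulNr mulrC cexpN_mul. Qed.

Lemma case_c m (th' : 'I_m.+1 -> C) (hth : hyp th') s :
  Ok 1 (fun t => Kf a (p_pm nu s) (vcons t th') - sgnb s * 2 * a * Kf a (p_pm nu s) th').
Proof.
case: s.
-
  have H : Ok 1 (fun t => \sum_(b : bool) \sum_(l : {ffun 'I_m.+1 -> bool})
     ((-1) ^+ b * sgnl l * Wf a th' l * om true b * (Ff a th' b l t - 1)
      + (-1) ^+ b * sgnl l * Wf a th' l * Zz true th' l * (cexp (- t) * Ff a th' b l t)
      + (-1) ^+ b * sgnl l * Wf a th' l * Ez true th' * om true b *
          (cexp t * (Ff a th' b l t - 1) - lin th' b l)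
      + (-1) ^+ b * sgnl l * Wf a th' l * Ez true th' * Zz true th' l * (Ff a th' b l t - 1))).
    apply: Ok_sum2 => b l.
    apply: Ok_add; [apply: Ok_add; [apply: Ok_add|]|].
    - exact: Ok_mul01 (Ok_const _) (F_small th' b l).
    - exact: Ok_mul01 (Ok_const _) (Ok_mul10 Ok_cexpN (F_bnd th' b l)).
    - exact: Ok_mul01 (Ok_const _) (F_grow th' b l).
    - exact: Ok_mul01 (Ok_const _) (F_small th' b l).
  apply: Ok_ext H => t /=.
  set E := Ez true th'.
  pose G := fun (b : bool) (l : {ffun 'I_m.+1 -> bool}) => (-1) ^+ b * sgnl l * Wf a th' l *
     (om true b + E * om true b * cexp t + E * om true b * lin th' b l + E * Zz true th' l).
  have hvx : cexp (- t) * cexp t = 1 by have := cexp_sg_mul true t; rewrite /= mulN1r mul1r.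
  have S1 : Kf a (p_pm nu true) (vcons t th') = \sum_(b : bool) \sum_(l : {ffun 'I_m.+1 -> bool})
     ((-1) ^+ b * sgnl l * Wf a th' l * om true b * (Ff a th' b l t - 1)
      + (-1) ^+ b * sgnl l * Wf a th' l * Zz true th' l * (cexp (- t) * Ff a th' b l t)
      + (-1) ^+ b * sgnl l * Wf a th' l * E * om true b *
          (cexp t * (Ff a th' b l t - 1) - lin th' b l)
      + (-1) ^+ b * sgnl l * Wf a th' l * E * Zz true th' l * (Ff a th' b l t - 1))
     + \sum_(b : bool) \sum_(l : {ffun 'I_m.+1 -> bool}) G b l.
    rewrite Kvcons -big_split; apply: eq_bigr => b _; rewrite -big_split; apply: eq_bigr => l _.
    rewrite p_pm_vcons /= mulN1r mul1r -/E.
    have pe : (cexp (- t) + E) * (cexp t * om true b + Zz true th' l) =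
       om true b + cexp (- t) * Zz true th' l + E * cexp t * om true b + E * Zz true th' l.
      apply/eqP; rewrite -subr_eq0.
      have -> : (cexp (- t) + E) * (cexp t * om true b + Zz true th' l) -
         (om true b + cexp (- t) * Zz true th' l + E * cexp t * om true b + E * Zz true th' l) =
         (cexp (- t) * cexp t - 1) * om true b by ring.
      by rewrite hvx subrr mul0r.
    rewrite pe /G; ring.
  pose c0 := (om true false - om true true) * (1 + E * cexp t) +
     E * (- \sum_(k < m.+1) 2 * a * cexp (th' k) * (om true true + om true false)).
  have S2 : \sum_(b : bool) \sum_(l : {ffun 'I_m.+1 -> bool}) G b l
       - sgnb true * 2 * a * Kf a (p_pm nu true) th' =
     \sum_(l : {ffun 'I_m.+1 -> bool}) sgnl l * Wf a th' l * c0.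
    rewrite exchange_big /Kf mulr_sumr -sumrB; apply: eq_bigr => l _.
    rewrite big_bool /G /=.
    have KL : om true false * lin th' false l - om true true * lin th' true l - 2 * a * Zz true th' l =
       - \sum_(k < m.+1) 2 * a * cexp (th' k) * (om true true + om true false).
      rewrite /lin /Zz !mulr_sumr -!sumrB -sumrN; apply: eq_bigr => k _.
      rewrite zl_split /= mul1r; case: (l k); rewrite /bnat /=; ring.
    have pth : p_pm nu true th' l = E * Zz true th' l by [].
    rewrite pth /c0 -KL; ring.
  move: S2; rewrite K0_const // => /eqP; rewrite subr_eq0 => /eqP S2.
  by rewrite S1 S2 addrK.
-
  have H : Ok 1 (fun t => \sum_(b : bool) \sum_(l : {ffun 'I_m.+1 -> bool})
     ((-1) ^+ b * sgnl l * Wf a th' l * om false b * (Ff a th' b l t - 1)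
      + (-1) ^+ b * sgnl l * Wf a th' l * Zz false th' l *
          (cexp t * (Ff a th' b l t - 1) - lin th' b l)
      + (-1) ^+ b * sgnl l * Wf a th' l * Ez false th' * om false b * (cexp (- t) * Ff a th' b l t)
      + (-1) ^+ b * sgnl l * Wf a th' l * Ez false th' * Zz false th' l * (Ff a th' b l t - 1))).
    apply: Ok_sum2 => b l.
    apply: Ok_add; [apply: Ok_add; [apply: Ok_add|]|].
    - exact: Ok_mul01 (Ok_const _) (F_small th' b l).
    - exact: Ok_mul01 (Ok_const _) (F_grow th' b l).
    - exact: Ok_mul01 (Ok_const _) (Ok_mul10 Ok_cexpN (F_bnd th' b l)).
    - exact: Ok_mul01 (Ok_const _) (F_small th' b l).
  apply: Ok_ext H => t /=.
  set E := Ez false th'.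
  pose G := fun (b : bool) (l : {ffun 'I_m.+1 -> bool}) => (-1) ^+ b * sgnl l * Wf a th' l *
     (om false b + Zz false th' l * cexp t + Zz false th' l * lin th' b l + E * Zz false th' l).
  have hvx : cexp t * cexp (- t) = 1 by exact: cexpN_mul.
  have S1 : Kf a (p_pm nu false) (vcons t th') = \sum_(b : bool) \sum_(l : {ffun 'I_m.+1 -> bool})
     ((-1) ^+ b * sgnl l * Wf a th' l * om false b * (Ff a th' b l t - 1)
      + (-1) ^+ b * sgnl l * Wf a th' l * Zz false th' l *
          (cexp t * (Ff a th' b l t - 1) - lin th' b l)
      + (-1) ^+ b * sgnl l * Wf a th' l * E * om false b * (cexp (- t) * Ff a th' b l t)
      + (-1) ^+ b * sgnl l * Wf a th' l * E * Zz false th' l * (Ff a th' b l t - 1))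
     + \sum_(b : bool) \sum_(l : {ffun 'I_m.+1 -> bool}) G b l.
    rewrite Kvcons -big_split; apply: eq_bigr => b _; rewrite -big_split; apply: eq_bigr => l _.
    rewrite p_pm_vcons /= opprK mul1r mulN1r -/E.
    have pe : (cexp t + E) * (cexp (- t) * om false b + Zz false th' l) =
       om false b + cexp t * Zz false th' l + E * cexp (- t) * om false b + E * Zz false th' l.
      apply/eqP; rewrite -subr_eq0.
      have -> : (cexp t + E) * (cexp (- t) * om false b + Zz false th' l) -
         (om false b + cexp t * Zz false th' l + E * cexp (- t) * om false b + E * Zz false th' l) =
         (cexp t * cexp (- t) - 1) * om false b by ring.
      by rewrite hvx subrr mul0r.
    rewrite pe /G; ring.
  pose c0 := om false false - om false true.
  have S2 : \sum_(b : bool) \sum_(l : {ffun 'I_m.+1 -> bool}) G b l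
       - sgnb false * 2 * a * Kf a (p_pm nu false) th' =
     \sum_(l : {ffun 'I_m.+1 -> bool}) sgnl l * Wf a th' l * c0.
    rewrite exchange_big /Kf mulr_sumr -sumrB; apply: eq_bigr => l _.
    rewrite big_bool /G /=.
    have KL : lin th' false l = lin th' true l - 2 * a * E.
      apply/eqP; rewrite -subr_eq0; apply/eqP.
      rewrite /lin /E /Ez mulr_sumr -!sumrB; apply: big1 => k _.
      rewrite /= opprK mul1r; case: (l k); rewrite /bnat /=; ring.
    have pth : p_pm nu false th' l = E * Zz false th' l by [].
    rewrite pth /c0 KL; ring.
  move: S2; rewrite K0_const // => /eqP; rewrite subr_eq0 => /eqP S2.
  by rewrite S1 S2 addrK.
Qed.

End S8.
Unset Implicit Arguments.
Theorem lemma3 (R : realType) (nu : R) (hnu0 : 0 < nu) (hnu1 : nu < 1)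
  (m : nat) (hm : (1 <= m)%N) (th' : 'I_m -> R[i])
  (hth' : forall i j : 'I_m, i != j -> csinh (th' i - th' j) != 0) :
  (* (a) *)
  (forall q : R[i], q != 0 ->
     bigO_Re (fun t => Kfun nu (p_q q) (vcons t th')
                       - Kfun nu (p_q q) (fun _ : 'I_1 => t) * Kfun nu (p_q q) th'))
  /\
  (* (b) *)
  (forall N : nat,
     bigO_Re (fun t => Kfun nu (p_N N) (vcons t th')
                       - \sum_(1 <= K < N)
                           'C(N, K)%:R * Kfun nu (p_N K) (fun _ : 'I_1 => t)
                                       * Kfun nu (p_N (N - K)) th'))
  /\
  (* (c) *)
  (forall s : bool,
     bigO_Re (fun t => Kfun nu (p_pm nu s) (vcons t th')
                       - sgnb s * 2%:R * (0 +i* 1) * (sin (pi * nu))%:C * Kfun nu (p_pm nu s) th'))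
  /\
  (* in particular *)
  (exists c : R[i], forall t : R[i], Kfun nu (p_N 1) (fun _ : 'I_1 => t) = c)
  /\
  bigO_Re (fun t => Kfun nu (p_N 1) (vcons t th')).
Proof.
set a : R[i] := (0 +i* 1) * (sin (pi * nu))%:C.
have KE : forall m0 (p : ('I_m0 -> R[i]) -> {ffun 'I_m0 -> bool} -> R[i]) th,
    Kfun nu p th = Kf a p th by [].
case: m hm th' hth' => // m _ th' hth'.
have hyp' : hyp th' by [].
have hb : forall N : nat,
     bigO_Re (fun t => Kfun nu (p_N N) (vcons t th')
                       - \sum_(1 <= K < N)
                           'C(N, K)%:R * Kfun nu (p_N K) (fun _ : 'I_1 => t)
                                       * Kfun nu (p_N (N - K)) th').
  by move=> N; apply: bigO_Ok; exact: (case_b a hyp' N).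
split; [|split; [exact: hb|split; [|split]]].
- by move=> q _; apply: bigO_Ok; exact: (case_a a th' q).
- move=> s; apply: bigO_Ok; apply: Ok_ext (case_c a nu hyp' s) => t.
  rewrite !KE /a; ring.
- exists 2 => t; rewrite KE K1_N big_bool /=; ring.
- have := hb 1%N; rewrite /bigO_Re => -[c [M h]]; exists c, M => t ht.
  by have := h t ht; rewrite big_geq // subr0.
Qed.
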